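(* Let $\mathcal{G}=(\mathcal{V},\mathcal{E})$ be an undirected weighted graph with nodes $\mathcal{V}=\{1,\ldots,n\}$, where each edge $\{i,i'\}\in\mathcal{E}$ ($i\neq i'$) carries a weight $A_{i,i'}=A_{i',i}>0$. For each node $i\in\mathcal{V}$ let $L_i:\mathbb{R}^d\to[0,\infty)$ be a non-negative local loss function. Let $\alpha>0$, and let $\{\widehat{\mathbf{w}}^{(i)}\}_{i=1}^n$, with $\widehat{\mathbf{w}}^{(i)}\in\mathbb{R}^d$, be any solution of the GTVMin problem $$\{\widehat{\mathbf{w}}^{(i)}\}_{i=1}^n\in\operatorname*{argmin}_{\mathbf{w}^{(1)},\ldots,\mathbf{w}^{(n)}\in\mathbb{R}^d}\Big[\sum_{i\in\mathcal{V}}L_i(\mathbf{w}^{(i)})+\alpha\sum_{\{i,i'\}\in\mathcal{E}}A_{i,i'}\|\mathbf{w}^{(i)}-\mathbf{w}^{(i')}\|_2^2\Big].$$ Let $\mathcal{C}\subseteq\mathcal{V}$ be a nonempty set of nodes (a cluster) for which there exist a vector $\overline{\mathbf{w}}^{(\mathcal{C})}\in\mathbb{R}^d$ and a number $\varepsilon^{(\mathcal{C})}\ge 0$ with $$\sum_{i\in\mathcal{C}}L_i\big(\overline{\mathbf{w}}^{(\mathcal{C})}\big)\le\varepsilon^{(\mathcal{C})}.$$ Assume $\lambda_2(\mathcal{C})>0$, where $\lambda_2(\mathcal{C})$ is the second smallest eigenvalue of the Laplacian matrix $\mathbf{L}^{(\mathcal{C})}$ of the induced subgraph $\mathcal{G}^{(\mathcal{C})}$.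 Let $R\ge 0$ satisfy $\max_{i\in\mathcal{V}\setminus\mathcal{C}}\|\widehat{\mathbf{w}}^{(i)}\|_2\le R$ (any $R\ge0$ if $\mathcal{C}=\mathcal{V}$). Define, for $i\in\mathcal{C}$, $\widetilde{\mathbf{w}}^{(i)}:=\widehat{\mathbf{w}}^{(i)}-\frac{1}{|\mathcal{C}|}\sum_{i'\in\mathcal{C}}\widehat{\mathbf{w}}^{(i')}$. Then $$\sum_{i\in\mathcal{C}}\|\widetilde{\mathbf{w}}^{(i)}\|_2^2\le\frac{1}{\alpha\,\lambda_2(\mathcal{C})}\Big[\varepsilon^{(\mathcal{C})}+2\alpha\,|\partial\mathcal{C}|\big(\|\overline{\mathbf{w}}^{(\mathcal{C})}\|_2^2+R^2\big)\Big],$$ where $|\partial\mathcal{C}|:=\sum_{\{i,i'\}\in\partial\mathcal{C}}A_{i,i'}$ with $\partial\mathcal{C}:=\{\{i,i'\}\in\mathcal{E}: i\in\mathcal{C},\ i'\notin\mathcal{C}\}$.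
   Context: The induced subgraph $\mathcal{G}^{(\mathcal{C})}$ has node set $\mathcal{C}$ and all edges $\{i,i'\}\in\mathcal{E}$ with $i,i'\in\mathcal{C}$, with the same weights. Its Laplacian is $\mathbf{L}^{(\mathcal{C})}=\mathbf{D}-\mathbf{A}$, where $\mathbf{A}$ is the weighted adjacency matrix of $\mathcal{G}^{(\mathcal{C})}$ (entry $A_{i,i'}$ for edges, $0$ otherwise) and $\mathbf{D}$ is the diagonal matrix of weighted degrees $\sum_{i'\in\mathcal{C}}A_{i,i'}$. The quantity $|\partial\mathcal{C}|$ is called the cluster boundary (total weight of edges leaving $\mathcal{C}$); when $\mathcal{C}=\mathcal{V}$ it equals $0$. *)

(* Defs.v *)
From HB Require Import structures.
From mathcomp Require Import all_boot all_order all_algebra.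
From mathcomp Require Import reals.
Set Implicit Arguments. Unset Strict Implicit. Unset Printing Implicit Defensive.
Import Order.TTheory GRing.Theory Num.Theory.
Local Open Scope ring_scope.

Section Defs.
Variable R : realType.

Definition sqnorm (d : nat) (v : 'rV[R]_d) : R := \sum_(k < d) v 0 k ^+ 2.
Definition norm2 (d : nat) (v : 'rV[R]_d) : R := Num.sqrt (sqnorm v).

(* A weighted undirected graph on nodes 'I_n is given by a weight matrix
   A : 'I_n -> 'I_n -> R, symmetric, zero diagonal, nonnegative;
   the edge set is { {i,i'} : A i i' > 0 }. *)
Definition weighted_graph (n : nat) (A : 'I_n -> 'I_n -> R) : Prop :=
  (forall i j, A i j = A j i) /\ (forall i, A i i = 0) /\ (forall i j, 0 <= A i j).

(* GTVMin objective; each undirected edge {i,j} is counted once (i < j). *)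
Definition gtv_objective (n d : nat) (A : 'I_n -> 'I_n -> R)
  (L : 'I_n -> 'rV[R]_d -> R) (alpha : R) (w : 'I_n -> 'rV[R]_d) : R :=
  \sum_(i < n) L i (w i)
  + alpha * \sum_(i < n) \sum_(j < n | (i < j)%N) A i j * sqnorm (w i - w j).

Definition is_gtvmin_solution (n d : nat) (A : 'I_n -> 'I_n -> R)
  (L : 'I_n -> 'rV[R]_d -> R) (alpha : R) (what : 'I_n -> 'rV[R]_d) : Prop :=
  forall w : 'I_n -> 'rV[R]_d,
    gtv_objective A L alpha what <= gtv_objective A L alpha w.

Definition laplacian_induced (n : nat) (A : 'I_n -> 'I_n -> R) (C : {set 'I_n})
  : 'M[R]_#|C| :=
  \matrix_(a, b)
    (if a == b then \sum_(j in C) A (enum_val a) j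
     else - A (enum_val a) (enum_val b)).

(* s is the list of eigenvalues of the square matrix M, counted with algebraic
   multiplicity, in nondecreasing order. Then s`_1 is the second smallest
   eigenvalue lambda_2. *)
Definition sorted_eigenvalues (m : nat) (M : 'M[R]_m) (s : seq R) : Prop :=
  sorted <=%R s /\ char_poly M = \prod_(x <- s) ('X - x%:P).

Definition boundary_weight (n : nat) (A : 'I_n -> 'I_n -> R) (C : {set 'I_n}) : R :=
  \sum_(i in C) \sum_(j in ~: C) A i j.

End Defs.

(* Main.v *)
Require Import Defs.
From HB Require Import structures.
From mathcomp Require Import all_boot all_order all_algebra.
From mathcomp Require Import reals.
From mathcomp Require Import sesquilinear spectral complex.
From mathcomp Require Import ring lra.
Set Implicit Arguments. Unset Strict Implicit. Unset Printing Implicit Defensive.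
Import Order.TTheory GRing.Theory Num.Theory.
Local Open Scope ring_scope.

Lemma char_poly_conj (F : fieldType) n (P B : 'M[F]_n) : P \in unitmx ->
  char_poly (invmx P *m B *m P) = char_poly B.
Proof.
move=> Pu; rewrite /char_poly /char_poly_mx.
have e1 : map_mx polyC (invmx P) *m map_mx polyC P = 1%:M.
  by rewrite -map_mxM mulVmx // map_mx1.
have eX : ('X%:M : 'M[{poly F}]_n) = map_mx polyC (invmx P) *m 'X%:M *m map_mx polyC P.
  by rewrite mul_mx_scalar -scalemxAl e1 scalemx1.
rewrite {1}eX !map_mxM -mulmxBl -mulmxBr !det_mulmx !det_map_mx mulrC mulrA.
by rewrite -rmorphM /= -det_mulmx mulmxV // det1 rmorph1 mul1r.
Qed.

Lemma cnt (T : finType) (P : pred T) : #|P| = count P (enum T).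
Proof. by rewrite cardE /enum_mem size_filter filter_predT. Qed.

Section Spec.
Local Open Scope sesquilinear_scope.

Lemma dotE (C : numClosedFieldType) m (a b : 'cV[C]_m) :
  (a ^t* *m b) 0 0 = \sum_k (a k 0)^* * b k 0.
Proof. by rewrite mxE; apply: eq_bigr => k _; rewrite !mxE. Qed.

Lemma dotDE (C : numClosedFieldType) m (a b : 'cV[C]_m) (d : 'rV[C]_m) :
  (a ^t* *m diag_mx d *m b) 0 0 = \sum_k (a k 0)^* * d 0 k * b k 0.
Proof. by rewrite mul_mx_diag mxE; apply: eq_bigr => k _; rewrite !mxE. Qed.

Lemma gapC (C : numClosedFieldType) m (M : 'M[C]_m) (lam : seq C) (l2 : C)
  (y : 'cV[C]_m) :
  M \is hermsymmx ->
  M *m (const_mx 1 : 'cV_m) = 0 ->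
  char_poly M = \prod_(x <- lam) ('X - x%:P) ->
  0 < l2 ->
  (count (fun x => ~~ (l2 <= x)%R) lam <= 1)%N ->
  (const_mx 1 : 'rV_m) *m y = 0 ->
  l2 * (y ^t* *m y) 0 0 <= (y ^t* *m M *m y) 0 0.
Proof.
case: m M y => [|m] M y HM M1 Hch l2p Hcnt Hy.
  by rewrite !mxE !big_ord0 mulr0.
set P := spectralmx M; set D := spectral_diag M.
have /orthomx_spectralP EM := hermitian_normalmx HM.
have PU : P \is unitarymx := spectral_unitarymx M.
have Pu : P \in unitmx := spectral_unit M.
have iP : invmx P = P^t* := invmx_unitary PU.
have Dr : D \is a realmx := hermitian_spectral_diag_real HM.
have Hch2 : char_poly M = \prod_(i < m.+1) ('X - (D 0 i)%:P).
  rewrite EM char_poly_conj // char_poly_trig ?diag_mx_is_trig //.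
  by apply: eq_bigr => i _; rewrite !mxE eqxx mulr1n.
have Hperm : perm_eq [seq D 0 i | i <- enum 'I_m.+1] lam.
  by apply: prod_XsubC_eq; rewrite -Hch big_map big_enum /= Hch2.
have Hcard : (#|[pred i | ~~ (l2 <= D 0 i)%R]| <= 1)%N.
  rewrite cnt; have -> : count [pred i | ~~ (l2 <= D 0 i)%R] (enum 'I_m.+1)
      = count (fun x => ~~ (l2 <= x)%R) [seq D 0 i | i <- enum 'I_m.+1].
    by rewrite [RHS]count_map.

  by rewrite (permP Hperm).
set w := P *m (const_mx 1 : 'cV_m.+1).
have Dw : forall k, D 0 k * w k 0 = 0.
  move=> k; have : diag_mx D *m w = 0.
    have PM : P *m M = diag_mx D *m P.
      by rewrite EM !mulmxA mulmxV // mul1mx.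
    by rewrite /w mulmxA -PM -mulmxA M1 mulmx0.
  by move/matrixP/(_ k 0); rewrite mul_diag_mx !mxE.
have [k0 wk0] : exists k0, w k0 0 != 0.
  have : w != 0.
    apply/eqP => w0; have : invmx P *m w = const_mx 1 by rewrite mulKmx.
    by rewrite w0 mulmx0 => /matrixP/(_ 0 0); rewrite !mxE => /eqP; rewrite eq_sym oner_eq0.
  by case/matrix0Pn => k [j]; rewrite [j]ord1 => ?; exists k.
have bad : forall k, ~~ (l2 <= D 0 k) -> k = k0.
  have bk0 : k0 \in [pred i | ~~ (l2 <= D 0 i)].
    rewrite inE; apply/negP => le; move: wk0; have := Dw k0.
    move/eqP; rewrite mulf_eq0 => /orP[/eqP D0|->//].
    by move: (lt_le_trans l2p le); rewrite D0 ltxx.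
  move=> k bk; have /card_le1P H := Hcard.
  by have := H k0 bk0 k; rewrite inE bk => /esym/eqP.
have wk : forall k, k != k0 -> w k 0 = 0.
  move=> k nk; have le : l2 <= D 0 k.
    by apply: contraNT nk => /bad ->.
  have := Dw k; move/eqP; rewrite mulf_eq0 => /orP[/eqP D0|/eqP//].
  by move: (lt_le_trans l2p le); rewrite D0 ltxx.
set z := P *m y.
have PP : P^t* *m P = 1%:M by rewrite -iP mulVmx.
have zk0 : z k0 0 = 0.
  have : (w ^t* *m z) = 0.
    rewrite /w /z trmx_mul map_mxM mulmxA -[_ *m P^t* *m P]mulmxA PP mulmx1.
    by rewrite trmx_const map_const_mx rmorph1 Hy.
  move/matrixP/(_ 0 0); rewrite dotE mxE (bigD1 k0) //= big1 ?addr0.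
    by move/eqP; rewrite mulf_eq0 conjC_eq0 (negPf wk0) => /eqP.
  by move=> k nk; rewrite wk // conjC0 mul0r.
have Q1 : y ^t* *m M *m y = z ^t* *m diag_mx D *m z.
  by rewrite EM iP /z trmx_mul map_mxM !mulmxA.
have Q2 : y ^t* *m y = z ^t* *m z.
  by rewrite /z trmx_mul map_mxM -!mulmxA [P^t* *m _]mulmxA PP mul1mx.
rewrite Q1 Q2 dotE dotDE mulr_sumr; apply: ler_sum => k _.
have [->|nk] := eqVneq k k0.
  by rewrite zk0 !mulr0.
have le : l2 <= D 0 k by apply: contraNT nk => /bad ->.
rewrite mulrAC [l2 * _]mulrC; apply: ler_wpM2l => //.
by rewrite mulrC mul_conjC_ge0.
Qed.

Lemma count_sorted (R : realType) (lam : seq R) :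
  sorted <=%R lam -> 0 < lam`_1 ->
  (count (fun x => ~~ (lam`_1 <= x)%R) lam <= 1)%N.
Proof.
case: lam => [|a [|b s]] /=; rewrite ?ltxx // => /andP[_ Hp] _.
have /allP Hs := order_path_min (@le_trans _ R) Hp.
rewrite lexx /= add0n; rewrite (eq_in_count (a2 := pred0)) ?count_pred0; first by case: (~~ _).
by move=> x /Hs /= ->.
Qed.

Lemma gapR (R : realType) m (M : 'M[R]_m) (lam : seq R) (y : 'cV[R]_m) :
  M^T = M -> M *m (const_mx 1 : 'cV_m) = 0 -> sorted <=%R lam ->
  char_poly M = \prod_(x <- lam) ('X - x%:P) -> 0 < lam`_1 ->
  (const_mx 1 : 'rV_m) *m y = 0 ->
  lam`_1 * (y^T *m y) 0 0 <= (y^T *m M *m y) 0 0.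
Proof.
move=> MT M1 Hs Hch l2p Hy.
pose f := real_complex R.
have cr : forall x : R, (f x)^* = f x.
  by move=> x; apply: conj_Creal; apply/complex_realP; exists x.
have yT : (map_mx f y) ^t* = map_mx f (y^T) by apply/matrixP => i j; rewrite !mxE cr.
have := @gapC _ m (map_mx f M) (map f lam) (f lam`_1) (map_mx f y).
have me : forall A : 'M[R]_1, (map_mx f A) 0 0 = f (A 0 0) by move=> A; rewrite mxE.
rewrite yT -!map_mxM !me -rmorphM lecR; apply.
- apply: realsym_hermsym.
    by rewrite qualifE /= expr0 scale1r map_mx_id // map_trmx MT.
  by apply/mxOverP => i j; rewrite mxE; apply/complex_realP; exists (M i j).
- by rewrite -(rmorph1 f) -map_const_mx -map_mxM M1 map_mx0.
- rewrite -map_char_poly Hch rmorph_prod big_map; apply: eq_bigr => x _.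
  by rewrite rmorphB /= map_polyX map_polyC.
- by rewrite ltcR.
- rewrite count_map (eq_count (a2 := fun x => ~~ (lam`_1 <= x)%R)).
    exact: count_sorted.
  by move=> x /=; rewrite lecR.
- by rewrite -(rmorph1 f) -map_const_mx -map_mxM Hy map_mx0.
Qed.

End Spec.

Lemma half_sum (R : realType) n (f : 'I_n -> 'I_n -> R) :
  (forall i j, f i j = f j i) -> (forall i, f i i = 0) ->
  2 * (\sum_(i < n) \sum_(j < n | (i < j)%N) f i j) = \sum_(i < n) \sum_(j < n) f i j.
Proof.
move=> fs f0.
have E : forall i j, f i j = ((i < j)%N)%:R * f i j + ((j < i)%N)%:R * f j i.
  move=> i j; case: (ltngtP i j) => h; rewrite ?mul1r ?mul0r ?addr0 ?add0r //.
  by have -> : i = j by apply: val_inj.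
rewrite [RHS](eq_bigr (fun i : 'I_n => \sum_(j < n) (((i < j)%N)%:R * f i j + ((j < i)%N)%:R * f j i))); last first.
  by move=> i _; apply: eq_bigr => j _; rewrite -E.
rewrite [RHS](eq_bigr (fun i : 'I_n => \sum_(j < n) ((i < j)%N)%:R * f i j + \sum_(j < n) ((j < i)%N)%:R * f j i)); last first.
  by move=> i _; rewrite big_split.
rewrite big_split /= [X in _ = _ + X]exchange_big /= mulr2n -?mulr2n.
have F : \sum_(i < n) \sum_(j < n | (i < j)%N) f i j = \sum_(i < n) \sum_(j < n) ((i < j)%N)%:R * f i j.
  apply: eq_bigr => i _; rewrite big_mkcond /=; apply: eq_bigr => j _.
  by case: (i < j)%N; rewrite ?mul1r ?mul0r.
rewrite F; ring.
Qed.

Section PartA.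
Variable R : realType.

Lemma sqnormB_sym d (a b : 'rV[R]_d) : sqnorm (a - b) = sqnorm (b - a).
Proof. by apply: eq_bigr => k _; rewrite !mxE; ring. Qed.

Lemma sqnorm_ge0 d (a : 'rV[R]_d) : 0 <= sqnorm a.
Proof. by apply: sumr_ge0 => k _; rewrite sqr_ge0. Qed.

Lemma sqnormB_le d (a b : 'rV[R]_d) : sqnorm (a - b) <= 2 * sqnorm a + 2 * sqnorm b.
Proof.
rewrite /sqnorm !mulr_sumr -big_split; apply: ler_sum => k _; rewrite !mxE.
rewrite -subr_ge0.
have -> : 2 * a 0 k ^+ 2 + 2 * b 0 k ^+ 2 - (a 0 k - b 0 k) ^+ 2 = (a 0 k + b 0 k) ^+ 2 by ring.
exact: sqr_ge0.
Qed.

Lemma sqnorm0 d : sqnorm (0 : 'rV[R]_d) = 0.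
Proof. by apply: big1 => k _; rewrite mxE expr0n. Qed.

Definition TV n d (A : 'I_n -> 'I_n -> R) (w : 'I_n -> 'rV[R]_d) :=
  \sum_(i < n) \sum_(j < n) A i j * sqnorm (w i - w j).

Lemma obj2 n d (A : 'I_n -> 'I_n -> R) (L : 'I_n -> 'rV[R]_d -> R) alpha w :
  weighted_graph A ->
  2 * gtv_objective A L alpha w = 2 * \sum_(i < n) L i (w i) + alpha * TV A w.
Proof.
move=> [As [A0 _]]; rewrite /gtv_objective mulrDr; congr (_ + _).
rewrite mulrCA half_sum //.
  by move=> i j; rewrite As sqnormB_sym.
by move=> i; rewrite A0 mul0r.
Qed.

Lemma split2 n (C : {set 'I_n}) (g : 'I_n -> 'I_n -> R) :
  \sum_(i < n) \sum_(j < n) g i j =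
  \sum_(i in C) \sum_(j in C) g i j + \sum_(i in C) \sum_(j | j \notin C) g i j
  + (\sum_(i in C) \sum_(j | j \notin C) g j i
  + \sum_(i | i \notin C) \sum_(j | j \notin C) g i j).
Proof.
rewrite (bigID (mem C)) /=.
rewrite [X in X + _](eq_bigr (fun i => \sum_(j in C) g i j + \sum_(j | j \notin C) g i j)); last first.
  by move=> i _; rewrite (bigID (mem C)).
rewrite [X in _ + X](eq_bigr (fun i => \sum_(j in C) g i j + \sum_(j | j \notin C) g i j)); last first.
  by move=> i _; rewrite (bigID (mem C)).
rewrite !big_split /= -!addrA; congr (_ + (_ + _)).
by rewrite exchange_big.
Qed.

Lemma partA n d (A : 'I_n -> 'I_n -> R) (L : 'I_n -> 'rV[R]_d -> R) alpha
  (what : 'I_n -> 'rV[R]_d) (C : {set 'I_n}) (wbar : 'rV[R]_d) epsC Rb :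
  weighted_graph A -> (forall i v, 0 <= L i v) -> 0 < alpha ->
  is_gtvmin_solution A L alpha what ->
  \sum_(i in C) L i wbar <= epsC -> 0 <= Rb ->
  (forall i, i \notin C -> norm2 (what i) <= Rb) ->
  alpha * (\sum_(i in C) \sum_(j in C) A i j * sqnorm (what i - what j))
  <= 2 * (epsC + 2 * alpha * boundary_weight A C * (sqnorm wbar + Rb ^+ 2)).
Proof.
move=> Hg L0 a0 Hopt HL Rb0 HR.
have [As [A0 Ag]] := Hg.
pose w' := fun i => if i \in C then wbar else what i.
have H0 : 2 * gtv_objective A L alpha what <= 2 * gtv_objective A L alpha w' by rewrite ler_pM2l //; apply: Hopt.
move: H0; rewrite !obj2 //.
rewrite /TV !(split2 C).
set CC := \sum_(i in C) \sum_(j in C) A i j * sqnorm (what i - what j).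
have e1 : \sum_(i in C) \sum_(j in C) A i j * sqnorm (w' i - w' j) = 0.
  apply: big1 => i iC; apply: big1 => j jC; by rewrite /w' iC jC subrr sqnorm0 mulr0.
have e2 : \sum_(i | i \notin C) \sum_(j | j \notin C) A i j * sqnorm (w' i - w' j)
   = \sum_(i | i \notin C) \sum_(j | j \notin C) A i j * sqnorm (what i - what j).
  by apply: eq_bigr => i iC; apply: eq_bigr => j jC; rewrite /w' (negPf iC) (negPf jC).
have bnd : forall i j, i \in C -> j \notin C -> A i j * sqnorm (w' i - w' j) <= A i j * (2 * (sqnorm wbar + Rb ^+ 2)).
  move=> i j iC jC; apply: ler_wpM2l => //; rewrite /w' iC (negPf jC).
  apply: (le_trans (sqnormB_le _ _)); rewrite mulrDr lerD2l ler_pM2l //.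
  have := HR j jC; rewrite /norm2 => h.
  have s0 := sqnorm_ge0 (what j).
  rewrite -(sqr_sqrtr s0); rewrite lerXn2r ?nnegrE ?sqrtr_ge0 //.
have bnd2 : forall i j, i \in C -> j \notin C -> A j i * sqnorm (w' j - w' i) <= A i j * (2 * (sqnorm wbar + Rb ^+ 2)).
  by move=> i j iC jC; rewrite As sqnormB_sym; apply: bnd.
have bwE : boundary_weight A C = \sum_(i in C) \sum_(j | j \notin C) A i j.
  by apply: eq_bigr => i _; apply: eq_bigl => j; rewrite in_setC.
set X1 := \sum_(i in C) \sum_(j | j \notin C) A i j * sqnorm (w' i - w' j).
set X2 := \sum_(i in C) \sum_(j | j \notin C) A j i * sqnorm (w' j - w' i).
have hX1 : X1 <= boundary_weight A C * (2 * (sqnorm wbar + Rb ^+ 2)).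
  rewrite bwE mulr_suml; apply: ler_sum => i iC.
  rewrite mulr_suml.
  by apply: ler_sum => j jC; apply: bnd.
have hX2 : X2 <= boundary_weight A C * (2 * (sqnorm wbar + Rb ^+ 2)).
  rewrite bwE mulr_suml; apply: ler_sum => i iC.
  rewrite mulr_suml.
  by apply: ler_sum => j jC; apply: bnd2.
have Y1 : 0 <= \sum_(i in C) \sum_(j | j \notin C) A i j * sqnorm (what i - what j).
  by apply: sumr_ge0 => i _; apply: sumr_ge0 => j _; apply: mulr_ge0 => //; apply: sqnorm_ge0.
have Y2 : 0 <= \sum_(i in C) \sum_(j | j \notin C) A j i * sqnorm (what j - what i).
  by apply: sumr_ge0 => i _; apply: sumr_ge0 => j _; apply: mulr_ge0 => //; apply: sqnorm_ge0.
have LC : \sum_(i < n) L i (w' i) = \sum_(i in C) L i wbar + \sum_(i | i \notin C) L i (what i).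
  rewrite (bigID (mem C)) /=; congr (_ + _); apply: eq_bigr => i iC; by rewrite /w' ?iC ?(negPf iC).
have LW : \sum_(i < n) L i (what i) = \sum_(i in C) L i (what i) + \sum_(i | i \notin C) L i (what i).
  by rewrite (bigID (mem C)).
have LC0 : 0 <= \sum_(i in C) L i (what i) by apply: sumr_ge0.
rewrite LC LW e1 e2 => H; rewrite !mulrDr mulr0 in H.
move: Y1 Y2 H.
set Y1 := \sum_(i in C) \sum_(j | j \notin C) A i j * sqnorm (what i - what j).
set Y2 := \sum_(i in C) \sum_(j | j \notin C) A j i * sqnorm (what j - what i).
set N2 := \sum_(i | i \notin C) \sum_(j | j \notin C) A i j * sqnorm (what i - what j).
move=> hY1 hY2 H.
set B := boundary_weight A C in hX1 hX2 *.
set S := sqnorm wbar + Rb ^+ 2 in hX1 hX2 *.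
have aX1 : alpha * X1 <= 2 * alpha * B * S.
  have -> : 2 * alpha * B * S = alpha * (B * (2 * S)) by ring.
  by rewrite ler_pM2l.
have aX2 : alpha * X2 <= 2 * alpha * B * S.
  have -> : 2 * alpha * B * S = alpha * (B * (2 * S)) by ring.
  by rewrite ler_pM2l.
have aY1 : 0 <= alpha * Y1 by apply: mulr_ge0 => //; apply: ltW.
have aY2 : 0 <= alpha * Y2 by apply: mulr_ge0 => //; apply: ltW.
lra.
Qed.

End PartA.

Section PartB.
Variable R : realType.

Definition lapB m (B : 'I_m -> 'I_m -> R) : 'M[R]_m :=
  \matrix_(a, b) (if a == b then \sum_(c < m) B a c else - B a b).

Lemma lapB_sym m (B : 'I_m -> 'I_m -> R) : (forall a b, B a b = B b a) ->
  (lapB B)^T = lapB B.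
Proof.
move=> Bs; apply/matrixP => a b; rewrite !mxE eq_sym.
by case: eqP => [->|_]; rewrite // Bs.
Qed.

Lemma lapB_one m (B : 'I_m -> 'I_m -> R) : (forall a, B a a = 0) ->
  lapB B *m (const_mx 1 : 'cV_m) = 0.
Proof.
move=> B0; apply/matrixP => a j; rewrite /lapB !mxE (bigD1 a) //= !mxE eqxx mulr1.
rewrite (bigD1 a) //= B0 add0r.
rewrite [X in _ + X](eq_bigr (fun b => - B a b)); last first.
  by move=> b nb; rewrite !mxE eq_sym (negPf nb) mulr1.
by rewrite sumrN subrr.
Qed.

Lemma quadE m (M : 'M[R]_m) (y : 'cV[R]_m) :
  (y^T *m M *m y) 0 0 = \sum_(a < m) \sum_(b < m) y a 0 * M a b * y b 0.
Proof.
rewrite mxE exchange_big; apply: eq_bigr => b _; rewrite mxE mulr_suml.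
by apply: eq_bigr => a _; rewrite !mxE.
Qed.

Lemma lapB_quad m (B : 'I_m -> 'I_m -> R) (y : 'cV[R]_m) :
  (forall a b, B a b = B b a) -> (forall a, B a a = 0) ->
  2 * (y^T *m lapB B *m y) 0 0 = \sum_(a < m) \sum_(b < m) B a b * (y a 0 - y b 0) ^+ 2.
Proof.
move=> Bs B0; rewrite quadE.
have E1 : forall a b, y a 0 * lapB B a b * y b 0
   = (a == b)%:R * (y a 0 * (\sum_(c < m) B a c) * y b 0) - B a b * y a 0 * y b 0.
  move=> a b; rewrite /lapB !mxE; case: eqP => [<-|_]; rewrite ?B0 /=; ring.
rewrite (eq_bigr (fun a => y a 0 ^+ 2 * (\sum_(c < m) B a c) - \sum_(b < m) B a b * y a 0 * y b 0)); last first.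
  move=> a _; rewrite (eq_bigr _ (fun b _ => E1 a b)) sumrB; congr (_ - _).
  rewrite [LHS](bigD1 a) //= eqxx mul1r [X in _ + X]big1 ?addr0; first by rewrite expr2; ring.
  by move=> b nb; rewrite eq_sym (negPf nb) mul0r.
have E2 : forall a b, B a b * (y a 0 - y b 0) ^+ 2
   = B a b * y a 0 ^+ 2 + B a b * y b 0 ^+ 2 - 2 * (B a b * y a 0 * y b 0).
  by move=> a b; ring.
rewrite [RHS](eq_bigr (fun a => \sum_(b < m) B a b * y a 0 ^+ 2 + \sum_(b < m) B a b * y b 0 ^+ 2 - 2 * \sum_(b < m) B a b * y a 0 * y b 0)); last first.
  by move=> a _; rewrite (eq_bigr _ (fun b _ => E2 a b)) sumrB big_split mulr_sumr.
rewrite [RHS]big_split /= sumrN -mulr_sumr big_split /=.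
have E3 : \sum_(a < m) \sum_(b < m) B a b * y b 0 ^+ 2 = \sum_(a < m) \sum_(b < m) B a b * y a 0 ^+ 2.
  by rewrite exchange_big; apply: eq_bigr => a _; apply: eq_bigr => b _; rewrite Bs.
have E4 : \sum_(a < m) \sum_(b < m) B a b * y a 0 ^+ 2 = \sum_(a < m) y a 0 ^+ 2 * \sum_(c < m) B a c.
  by apply: eq_bigr => a _; rewrite mulr_sumr; apply: eq_bigr => b _; rewrite mulrC.
rewrite [X in _ = X - _]big_split /= sumrN E3 E4; ring.
Qed.

End PartB.

Theorem theorem1 (R : realType) (n d : nat) (A : 'I_n -> 'I_n -> R)
  (L : 'I_n -> 'rV[R]_d -> R) (alpha : R) (what : 'I_n -> 'rV[R]_d)
  (C : {set 'I_n}) (wbar : 'rV[R]_d) (epsC : R) (lam : seq R) (Rb : R) :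
  weighted_graph A ->
  (forall i v, 0 <= L i v) ->
  0 < alpha ->
  is_gtvmin_solution A L alpha what ->
  C != set0 ->
  0 <= epsC ->
  \sum_(i in C) L i wbar <= epsC ->
  sorted_eigenvalues (laplacian_induced A C) lam ->
  0 < lam`_1 ->
  0 <= Rb ->
  (forall i, i \notin C -> norm2 (what i) <= Rb) ->
  \sum_(i in C)
      sqnorm (what i - (#|C|%:R)^-1 *: \sum_(i' in C) what i')
  <= (alpha * lam`_1)^-1
     * (epsC + 2 * alpha * boundary_weight A C * (sqnorm wbar + Rb ^+ 2)).
Proof.
move=> Hg L0 a0 Hopt CN e0 HL Hsort l2p Rb0 HR.
have [As [A0 Ag]] := Hg.
have HA := partA Hg L0 a0 Hopt HL Rb0 HR.
have [Hs Hch] := Hsort.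
pose B := fun a b : 'I_#|C| => A (enum_val a) (enum_val b).
have Bs : forall a b, B a b = B b a by move=> a b; rewrite /B As.
have B0 : forall a, B a a = 0 by move=> a; rewrite /B A0.
have LE : laplacian_induced A C = lapB B.
  apply/matrixP => a b; rewrite !mxE; case: eqP => // _.
  by rewrite big_enum_val.
rewrite LE in Hch.
have Cpos : (0 < #|C|)%N by rewrite card_gt0.
have Cn0 : (#|C|%:R : R) != 0 by rewrite pnatr_eq0 -lt0n.
pose mean := (#|C|%:R)^-1 *: \sum_(i' in C) what i'.
pose y := fun k : 'I_d => (\col_a (what (enum_val a) 0 k - mean 0 k) : 'cV[R]_#|C|).
have W : \sum_(i in C) sqnorm (what i - mean) = \sum_(k < d) ((y k)^T *m y k) 0 0.
  rewrite /sqnorm exchange_big; apply: eq_bigr => k _.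
  rewrite big_enum_val mxE; apply: eq_bigr => a _; rewrite !mxE expr2 //.
have Hy : forall k, (const_mx 1 : 'rV_#|C|) *m y k = 0.
  move=> k; apply/matrixP => i j; rewrite !mxE.
  rewrite (eq_bigr (fun a => what (enum_val a) 0 k - mean 0 k)); last first.
    by move=> a _; rewrite !mxE mul1r.
  have E : \sum_(i in C) what i 0 k = \sum_(a < #|C|) what (enum_val a) 0 k.
    by rewrite big_enum_val.
  rewrite sumrB sumr_const card_ord -E /mean !mxE summxE.
  by rewrite -mulrnAl -mulr_natr mulVf ?mul1r ?subrr.
have Q : forall k, lam`_1 * ((y k)^T *m y k) 0 0 <= ((y k)^T *m lapB B *m y k) 0 0.
  by move=> k; apply: gapR => //; [apply: lapB_sym | apply: lapB_one].
have CCE : \sum_(k < d) 2 * ((y k)^T *m lapB B *m y k) 0 0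
    = \sum_(i in C) \sum_(j in C) A i j * sqnorm (what i - what j).
  rewrite (eq_bigr (fun k => \sum_(a < #|C|) \sum_(b < #|C|) B a b * (y k a 0 - y k b 0) ^+ 2)); last first.
    by move=> k _; rewrite lapB_quad.
  rewrite [RHS]big_enum_val [LHS]exchange_big; apply: eq_bigr => a _.
  rewrite [RHS]big_enum_val [LHS]exchange_big; apply: eq_bigr => b _.
  rewrite /sqnorm mulr_sumr; apply: eq_bigr => k _.
  by rewrite /y /B !mxE; congr (_ * _); congr (_ ^+ 2); ring.
have l0 : 0 < alpha * lam`_1 by apply: mulr_gt0.
rewrite -(ler_pM2l l0) mulrA mulfV ?gt_eqF // mul1r W.
have S1 : lam`_1 * \sum_(k < d) ((y k)^T *m y k) 0 0 <= \sum_(k < d) ((y k)^T *m lapB B *m y k) 0 0.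
  by rewrite mulr_sumr; apply: ler_sum => k _; apply: Q.
move: HA; rewrite -CCE -mulr_sumr => HA.
set X := \sum_(k < d) ((y k)^T *m y k) 0 0 in S1 *.
set Z := \sum_(k < d) ((y k)^T *m lapB B *m y k) 0 0 in S1 HA.
set RHS := epsC + _ in HA *.
have : alpha * (lam`_1 * X) <= alpha * Z by rewrite ler_pM2l.
rewrite mulrA; lra.
Qed.
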